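(* Let $\mathbf{a}\in\mathbb{C}^N$, $h_{aw}\in\mathbb{C}$, $\sigma_w^2>0$, $\epsilon>0$ and $L>0$, and let $$\mathbf{A}=\begin{bmatrix}\mathbf{a}\mathbf{a}^H & \mathbf{a}h_{aw}^*\\ h_{aw}\mathbf{a}^H & |h_{aw}|^2\end{bmatrix}\in\mathbb{C}^{(N+1)\times(N+1)}.$$ For Hermitian positive semidefinite $\mathbf{W}\in\mathbb{C}^{(N+1)\times(N+1)}$, the constraint $$\ln\!\left(1+\frac{\mathrm{Tr}(\mathbf{A}\mathbf{W})}{\sigma_w^2}\right)-\frac{\mathrm{Tr}(\mathbf{A}\mathbf{W})}{\mathrm{Tr}(\mathbf{A}\mathbf{W})+\sigma_w^2}\le \frac{2\epsilon^2}{L}$$ is equivalent to $$\left(1+\frac{\mathrm{Tr}(\mathbf{A}\mathbf{W})}{\sigma_w^2}\right)\ln\!\left(1+\frac{\mathrm{Tr}(\mathbf{A}\mathbf{W})}{\sigma_w^2}\right)-\left(1+\frac{2\epsilon^2}{L}\right)\frac{\mathrm{Tr}(\mathbf{A}\mathbf{W})}{\sigma_w^2}\le\frac{2\epsilon^2}{L},$$ and the latter is a convex constraint with respect to $\mathbf{W}$ (on the cone of Hermitian positive semidefinite matrices).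
   Context: The first inequality is the covertness constraint $\mathcal{D}(\mathbb{P}_0|\mathbb{P}_1)\le 2\epsilon^2$ (Kullback–Leibler divergence over $L$ channel uses) after the lifting $\mathbf{W}=\mathbf{w}\mathbf{w}^H$ of a scaled reflection vector; $\mathrm{Tr}$ denotes the trace. *)

(* Defs.v *)
From HB Require Import structures.
From mathcomp Require Import all_boot all_order all_algebra.
From mathcomp Require Import complex.
From mathcomp Require Import reals exp.
Set Implicit Arguments. Unset Strict Implicit. Unset Printing Implicit Defensive.
Import Order.TTheory GRing.Theory Num.Theory.
Local Open Scope ring_scope.
Local Open Scope complex_scope.

Definition ctrmx (R : rcfType) m n (M : 'M[R[i]]_(m, n)) : 'M[R[i]]_(n, m) :=
  (map_mx (fun z => z^*) M)^T.

Definition hermitian_psd (R : rcfType) n (W : 'M[R[i]]_n) : Prop :=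
  ctrmx W = W /\ forall x : 'cV[R[i]]_n, 0 <= (ctrmx x *m W *m x) 0 0.

Definition Amx (R : rcfType) N (a : 'cV[R[i]]_N) (h : R[i]) : 'M[R[i]]_(N + 1) :=
  block_mx (a *m ctrmx a) (a *m (h^*)%:M)
           ((h%:M : 'M_1) *m ctrmx a) ((`|h| ^+ 2)%:M).

(* Tr(A W), a real number for Hermitian PSD A, W; we take its real part *)
Definition trAW (R : rcfType) N (a : 'cV[R[i]]_N) (h : R[i]) (W : 'M[R[i]]_(N + 1)) : R :=
  complex.Re (\tr (Amx a h *m W)).

Definition constr1 (R : realType) N (a : 'cV[R[i]]_N) (h : R[i]) (s2 : R)
  (W : 'M[R[i]]_(N + 1)) : R :=
  let t := trAW a h W in ln (1 + t / s2) - t / (t + s2).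

Definition constr2 (R : realType) N (a : 'cV[R[i]]_N) (h : R[i]) (s2 c : R)
  (W : 'M[R[i]]_(N + 1)) : R :=
  let t := trAW a h W in (1 + t / s2) * ln (1 + t / s2) - (1 + c) * (t / s2).

(* Main.v *)
Require Import Defs.
From HB Require Import structures.
From mathcomp Require Import all_boot all_order all_algebra.
From mathcomp Require Import complex.
From mathcomp Require Import reals exp.
From mathcomp Require Import ring lra.
Import Order.TTheory GRing.Theory Num.Theory.
Local Open Scope ring_scope.
Local Open Scope complex_scope.

Lemma ln_aux {R : realType} (u w : R) : 0 < u -> 0 < w ->
  u * ln w - u * ln u <= w - u.
Proof.
move=> hu hw.
have h1 : -1 < w / u - 1.
  have : 0 < w / u by apply: divr_gt0.
  lra.
have := le_ln1Dx h1.
rewrite addrCA subrr addr0 ln_div ?posrE // => h.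
rewrite -mulrBr.
have -> : w - u = u * (w / u - 1).
  rewrite mulrBr mulr1 mulrCA divff ?mulr1 //; exact: lt0r_neq0.
by rewrite ler_pM2l.
Qed.

Lemma xlnx_convex {R : realType} (u1 u2 lam : R) : 0 < u1 -> 0 < u2 ->
  0 <= lam <= 1 ->
  (lam * u1 + (1 - lam) * u2) * ln (lam * u1 + (1 - lam) * u2)
  <= lam * (u1 * ln u1) + (1 - lam) * (u2 * ln u2).
Proof.
move=> h1 h2 /andP[l0 l1].
set w := lam * u1 + (1 - lam) * u2.
have hw : 0 < w.
  rewrite /w; case: (ltrP 0 lam) => hl.
    apply: ltr_pwDl; [exact: mulr_gt0| apply: mulr_ge0; lra].
  have -> : lam = 0 by lra.
  by rewrite mul0r add0r subr0 mul1r.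
have A1 := @ln_aux R u1 w h1 hw.
have A2 := @ln_aux R u2 w h2 hw.
set L := ln w in A1 A2 *.
set L1 := ln u1 in A1 A2 *.
set L2 := ln u2 in A1 A2 *.
have B1 : lam * (u1 * L - u1 * L1) <= lam * (w - u1) by apply: ler_wpM2l.
have B2 : (1 - lam) * (u2 * L - u2 * L2) <= (1 - lam) * (w - u2).
  by apply: ler_wpM2l; lra.
have E : lam * (w - u1) + (1 - lam) * (w - u2) = 0 by rewrite /w; ring.
have : w * L - (lam * (u1 * L1) + (1 - lam) * (u2 * L2)) =
   lam * (u1 * L - u1 * L1) + (1 - lam) * (u2 * L - u2 * L2) by rewrite /w; ring.
lra.
Qed.
Lemma ctrmx_col (R : rcfType) m1 m2 n (A : 'M[R[i]]_(m1, n)) (B : 'M[R[i]]_(m2, n)) :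
  ctrmx (col_mx A B) = row_mx (ctrmx A) (ctrmx B).
Proof. by rewrite /ctrmx map_col_mx tr_col_mx. Qed.

Lemma ctrmx_scalar (R : rcfType) (h : R[i]) : ctrmx (h%:M : 'M_1) = (h^*)%:M.
Proof. by rewrite /ctrmx map_scalar_mx tr_scalar_mx. Qed.

Lemma Amx_eq (R : rcfType) N (a : 'cV[R[i]]_N) (h : R[i]) :
  Amx a h = col_mx a (h%:M) *m ctrmx (col_mx a (h%:M)).
Proof.
rewrite ctrmx_col ctrmx_scalar mul_col_row /Amx.
by rewrite -scalar_mxM sqr_normc.
Qed.

Lemma trAW_ge0 (R : rcfType) N (a : 'cV[R[i]]_N) (h : R[i]) W :
  hermitian_psd W -> 0 <= trAW a h W.
Proof.
case=> _ /(_ (col_mx a (h%:M))).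
move=> H; rewrite /trAW Amx_eq -mulmxA mxtrace_mulC trace_mx11; move: H.
by case: (_ 0 0) => x y; rewrite lecE /= => /andP[_].
Qed.

Lemma trAW_lin (R : rcfType) N (a : 'cV[R[i]]_N) (h : R[i]) W1 W2 (l1 l2 : R) :
  trAW a h (l1%:C *: W1 + l2%:C *: W2) = l1 * trAW a h W1 + l2 * trAW a h W2.
Proof.
rewrite /trAW mulmxDr -!scalemxAr mxtraceD !mxtraceZ.
case: (\tr _) => x1 y1; case: (\tr _) => x2 y2 /=.
ring.
Qed.

Theorem lemma1 (R : realType) (N : nat) (a : 'cV[R[i]]_N) (h : R[i])
  (s2 eps L : R) (hs2 : 0 < s2) (heps : 0 < eps) (hL : 0 < L) :
  (forall W : 'M[R[i]]_(N + 1), hermitian_psd W ->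
     (constr1 a h s2 W <= 2 * eps ^+ 2 / L <->
      constr2 a h s2 (2 * eps ^+ 2 / L) W <= 2 * eps ^+ 2 / L))
  /\
  (forall (W1 W2 : 'M[R[i]]_(N + 1)) (lam : R),
     hermitian_psd W1 -> hermitian_psd W2 -> 0 <= lam <= 1 ->
     constr2 a h s2 (2 * eps ^+ 2 / L) ((lam%:C) *: W1 + ((1 - lam)%:C) *: W2)
     <= lam * constr2 a h s2 (2 * eps ^+ 2 / L) W1
        + (1 - lam) * constr2 a h s2 (2 * eps ^+ 2 / L) W2).
Proof.
set c := 2 * eps ^+ 2 / L.
split.
  move=> W /(@trAW_ge0 R N a h) ht; rewrite /constr1 /constr2.
  move: ht; set t := trAW a h W => ht.
  set x := t / s2.
  have hx : 0 <= x by rewrite /x; apply: divr_ge0; [exact: ht|exact: ltW].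
  have hu : 0 < 1 + x by lra.
  have E : t / (t + s2) = x / (1 + x).
    rewrite /x; field.
    by rewrite !lt0r_neq0 //; lra.
  rewrite E; set l := ln (1 + x).
  rewrite -(ler_pM2l hu).
  have -> : (1 + x) * (l - x / (1 + x)) = (1 + x) * l - x.
    field; exact: lt0r_neq0.
  split => H; lra.
move=> W1 W2 lam H1 H2 hl.
have t1 := @trAW_ge0 R N a h W1 H1.
have t2 := @trAW_ge0 R N a h W2 H2.
rewrite /constr2 trAW_lin.
set x1 := trAW a h W1 in t1 *; set x2 := trAW a h W2 in t2 *.
have -> : 1 + (lam * x1 + (1 - lam) * x2) / s2 =
   lam * (1 + x1 / s2) + (1 - lam) * (1 + x2 / s2).
  field; exact: lt0r_neq0.
have hc := @xlnx_convex R (1 + x1 / s2) (1 + x2 / s2) lam.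
have u1 : 0 < 1 + x1 / s2.
  have : 0 <= x1 / s2 by apply: divr_ge0; [exact: t1|exact: ltW].
  lra.
have u2 : 0 < 1 + x2 / s2.
  have : 0 <= x2 / s2 by apply: divr_ge0; [exact: t2|exact: ltW].
  lra.
move: (hc u1 u2 hl).
have -> : (lam * x1 + (1 - lam) * x2) / s2 = lam * (x1 / s2) + (1 - lam) * (x2 / s2).
  field; exact: lt0r_neq0.
set L1 := ln (1 + x1 / s2); set L2 := ln (1 + x2 / s2).
set Lw := ln _.
set y1 := x1 / s2; set y2 := x2 / s2.
move=> hcv.
have -> : lam * ((1 + y1) * L1 - (1 + c) * y1) + (1 - lam) * ((1 + y2) * L2 - (1 + c) * y2)
  = lam * ((1 + y1) * L1) + (1 - lam) * ((1 + y2) * L2)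
    - (1 + c) * (lam * y1 + (1 - lam) * y2) by ring.
lra.
Qed.
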